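(* Let $u\in(0,1/2)$ and let $f\in L^1(\mu)$ be strictly increasing on $[0,1]$. Then \[\int_u^1 \hat F f\,d\mu<\int_u^1 f\,d\mu;\] more precisely, $\int_u^1 f\,d\mu-\int_u^1\hat F f\,d\mu\ge \bigl(f(\tfrac{1}{1+u})-f(u)\bigr)\log(1+u)$.
   Context: $\mu$ is the measure on $[0,1]$ with $d\mu=dx/x$. $\hat F$ is the transfer operator of the Farey map $F$ (where $F(x)=x/(1-x)$ for $0\le x\le1/2$, $F(x)=(1-x)/x$ for $1/2<x\le1$) with respect to $\mu$, i.e. the positive linear operator on $L^1(\mu)$ with $\int_B\hat Ff\,d\mu=\int_{F^{-1}B}f\,d\mu$ for all Borel $B\subseteq[0,1]$; explicitly $\hat Ff(x)=\dfrac{f(x/(1+x))+x\,f(1/(1+x))}{1+x}$. *)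

(* Defs.v *)
From Stdlib Require Import Reals Lra.
Open Scope R_scope.

(* Transfer operator of the Farey map w.r.t. mu = dx/x (explicit formula). *)
Definition Fhat (f : R -> R) (x : R) : R :=
  (f (x / (1 + x)) + x * f (1 / (1 + x))) / (1 + x).

(* Density of the integrand against mu: int_B g dmu = int_B g(x)/x dx. *)
Definition mu_dens (g : R -> R) (x : R) : R := g x / x.

(* f in L^1(mu) on [0,1]: the improper Riemann integral int_0^1 |f(x)|/x dx
   is finite, i.e. |f|/x is Riemann integrable on every [a,1], a in (0,1],
   with uniformly bounded integrals. *)
Definition L1_mu (f : R -> R) : Prop :=
  exists M : R, forall a : R, 0 < a <= 1 ->
    exists pr : Riemann_integrable (mu_dens (fun x => Rabs (f x))) a 1,
      RiemannInt pr <= M.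

Definition strictly_increasing_01 (f : R -> R) : Prop :=
  forall x y, 0 <= x -> x < y -> y <= 1 -> f x < f y.

(* Main.v *)
Require Import Defs.
From Stdlib Require Import Reals Lra.
From Coquelicot Require Import Coquelicot.
From Stdlib Require Import ClassicalEpsilon.
Open Scope R_scope.
Lemma ftc1 s t : 0 < s <= t -> RInt (fun y => / y) s t = ln t - ln s.
Proof.
  intros H. apply is_RInt_unique.
  apply (is_RInt_derive ln (fun y => / y)).
  - rewrite Rmin_left, Rmax_right by lra. intros x Hx. auto_derive. lra. field. lra.
  - rewrite Rmin_left, Rmax_right by lra. intros x Hx. apply (ex_derive_continuous (fun y => / y)). auto_derive. lra.
Qed.
Lemma ftc2 s t : 0 < s <= t -> RInt (fun x => / (x * (1 + x))) s t = ln (t / (1 + t)) - ln (s / (1 + s)).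
Proof.
  intros H. apply is_RInt_unique.
  apply (is_RInt_derive (fun x => ln (x / (1 + x))) (fun x => / (x * (1 + x)))).
  - rewrite Rmin_left, Rmax_right by lra. intros x Hx. auto_derive.
    + split; [|split]; try lra. apply Rdiv_lt_0_compat; lra. 
    + field. lra.
  - rewrite Rmin_left, Rmax_right by lra. intros x Hx. apply (ex_derive_continuous (fun x => / (x * (1 + x)))). auto_derive. nra.
Qed.
Lemma ftc3 s t : 0 < s <= t -> RInt (fun x => / (1 + x)) s t = ln (1 + t) - ln (1 + s).
Proof.
  intros H. apply is_RInt_unique.
  apply (is_RInt_derive (fun x => ln (1 + x)) (fun x => / (1 + x))).
  - rewrite Rmin_left, Rmax_right by lra. intros x Hx. auto_derive. lra. field. lra.
  - rewrite Rmin_left, Rmax_right by lra. intros x Hx. apply (ex_derive_continuous (fun x => / (1 + x))). auto_derive. lra.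
Qed.

Definition zeroSF (a b : R) : StepFun a b := mkStepFun (StepFun_P4 a b 0).

Definition SF_int {a b : R} (phi : StepFun a b) : Riemann_integrable phi a b.
Proof.
  intro eps. exists phi. exists (zeroSF a b). split.
  - intros t _. unfold zeroSF; simpl; unfold fct_cte. rewrite Rminus_diag, Rabs_R0. lra.
  - unfold zeroSF. rewrite StepFun_P18, Rmult_0_l, Rabs_R0. apply cond_pos.
Defined.

Lemma SF_int_val {a b : R} (phi : StepFun a b) (pr : Riemann_integrable phi a b) :
  RiemannInt pr = RiemannInt_SF phi.
Proof.
  rewrite (RiemannInt_P5 pr (SF_int phi)).
  unfold RiemannInt. destruct (RiemannInt_exists (SF_int phi) RinvN RinvN_cv) as [l Hl].
  apply UL_sequence with (1 := Hl).
  intros e He. exists 0%nat. intros n _. unfold phi_sequence. simpl.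
  unfold Rdist. rewrite Rminus_diag, Rabs_R0. exact He.
Qed.

Lemma SF_approx (g : R -> R) (a b : R) (pr : Riemann_integrable g a b)
  (phi psi : StepFun a b) : a <= b ->
  (forall t, Rmin a b <= t <= Rmax a b -> Rabs (g t - phi t) <= psi t) ->
  Rabs (RiemannInt pr - RiemannInt_SF phi) <= RiemannInt_SF psi.
Proof.
  intros hab H.
  pose proof (RiemannInt_P10 (-1) pr (SF_int phi)) as prd.
  rewrite <- (SF_int_val phi (SF_int phi)).
  rewrite <- (SF_int_val psi (SF_int psi)).
  replace (RiemannInt pr - RiemannInt (SF_int phi)) with (RiemannInt prd)
    by (rewrite (RiemannInt_P13 pr (SF_int phi) prd); ring).
  eapply Rle_trans. apply (RiemannInt_P17 prd (RiemannInt_P16 prd) hab).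
  apply RiemannInt_P19; auto.
  intros x Hx. replace (g x + -1 * phi x) with (g x - phi x) by ring.
  apply H. rewrite Rmin_left, Rmax_right; lra.
Qed.

Definition Qs (g : R -> R) (a b eta : R) : Type :=
  { l : R -> R & { h : R -> R &
    (Riemann_integrable l a b * Riemann_integrable h a b *
     ((forall x, a <= x <= b -> l x <= g x <= h x) /\
      RInt h a b - RInt l a b <= eta))%type } }.

Lemma Rabs_le_bw x y : Rabs x <= y -> -y <= x <= y.
Proof. unfold Rabs; destruct (Rcase_abs x); lra. Qed.

Lemma squeeze (g : R -> R) (a b : R) : a <= b ->
  (forall eta, 0 < eta -> Qs g a b eta) -> Riemann_integrable g a b.
Proof.
  intros hab HQ eps.
  assert (he4 : 0 < eps / 4) by (destruct eps; simpl; lra).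
  destruct (HQ _ he4) as [l [h [[prl prh] [Hb Hgap]]]].
  set (e4 := mkposreal _ he4).
  destruct (prl e4) as [phi1 [psi1 [H1 I1]]].
  pose proof (RiemannInt_P10 (-1) prh prl) as prd.
  destruct (prd e4) as [phi2 [psi2 [H2 I2]]].
  exists phi1.
  exists (mkStepFun (StepFun_P28 1 psi1 (mkStepFun (StepFun_P28 1 phi2 psi2)))).
  rewrite Rmin_left, Rmax_right in * by lra.
  assert (Hpt : forall t, a <= t <= b ->
     Rabs (g t - phi1 t) <= psi1 t + 1 * (phi2 t + 1 * psi2 t)).
  { intros t Ht. specialize (H1 t Ht). specialize (H2 t Ht). specialize (Hb t Ht).
    apply Rabs_le_bw in H1. apply Rabs_le_bw in H2.
    unfold Rabs; destruct (Rcase_abs (g t - phi1 t)); lra. }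
  split.
  { intros t Ht. apply Hpt. exact Ht. }
  rewrite StepFun_P30. rewrite StepFun_P30.
  pose proof (SF_approx _ _ _ prd phi2 psi2 hab) as HA.
  rewrite Rmin_left, Rmax_right in HA by lra.
  specialize (HA H2). apply Rabs_le_bw in HA.
  rewrite (RiemannInt_P13 prh prl prd) in HA.
  rewrite <- (RInt_Reals h a b prh), <- (RInt_Reals l a b prl) in HA.
  simpl in I1, I2. apply Rabs_def2 in I1. apply Rabs_def2 in I2.
  assert (Hnn : 0 <= RiemannInt_SF psi1 + 1 * (RiemannInt_SF phi2 + 1 * RiemannInt_SF psi2)).
  { rewrite <- StepFun_P30, <- StepFun_P30 with (f := psi1).
    replace 0 with (RiemannInt_SF (zeroSF a b)) by (unfold zeroSF; rewrite StepFun_P18; ring).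
    apply StepFun_P37; auto. intros x Hx. simpl. unfold fct_cte.
    eapply Rle_trans; [apply Rabs_pos | apply Hpt; lra]. }
  unfold Rabs; destruct Rcase_abs; lra.
Qed.

Definition RI_open (g g' : R -> R) (a b : R) (hab : a <= b)
  (H : forall x, a < x < b -> g' x = g x) (pr : Riemann_integrable g' a b) :
  Riemann_integrable g a b.
Proof.
  apply ex_RInt_Reals_0. apply (ex_RInt_ext g').
  - rewrite Rmin_left, Rmax_right by lra. exact H.
  - apply (ex_RInt_Reals_1 _ _ _ pr).
Defined.

Definition glue (c : R) (f1 f2 : R -> R) (x : R) : R :=
  if Rlt_dec x c then f1 x else f2 x.

Definition glue_int (a c b : R) (f1 f2 : R -> R) (hac : a <= c) (hcb : c <= b)
  (p1 : Riemann_integrable f1 a c) (p2 : Riemann_integrable f2 c b) :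
  Riemann_integrable (glue c f1 f2) a b.
Proof.
  apply RiemannInt_P24 with c.
  - apply (RI_open _ f1 a c hac); [|exact p1].
    intros x Hx. unfold glue. destruct (Rlt_dec x c); [reflexivity|lra].
  - apply (Riemann_integrable_ext f2); [|exact p2].
    rewrite Rmin_left, Rmax_right by lra.
    intros x Hx. unfold glue. destruct (Rlt_dec x c); [lra|reflexivity].
Defined.

Lemma plusR (x y : R) : plus x y = x + y.
Proof. reflexivity. Qed.

Lemma RInt_scal_R (f : R -> R) a b k : ex_RInt f a b ->
  RInt (fun x => k * f x) a b = k * RInt f a b.
Proof. intro H. exact (RInt_scal f a b k H). Qed.

Lemma glue_RInt (a c b : R) (f1 f2 : R -> R) (hac : a <= c) (hcb : c <= b)
  (p1 : Riemann_integrable f1 a c) (p2 : Riemann_integrable f2 c b) :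
  RInt (glue c f1 f2) a b = RInt f1 a c + RInt f2 c b.
Proof.
  pose proof (glue_int a c b f1 f2 hac hcb p1 p2) as p.
  rewrite <- plusR, <- (RInt_Chasles _ a c b).
  - f_equal; apply RInt_ext; [rewrite Rmin_left, Rmax_right by lra|
                               rewrite Rmin_left, Rmax_right by lra];
    intros x Hx; unfold glue; destruct (Rlt_dec x c); try reflexivity; lra.
  - apply ex_RInt_Reals_1. apply RiemannInt_P22 with b; [exact p|lra].
  - apply ex_RInt_Reals_1. apply RiemannInt_P23 with a; [exact p|lra].
Qed.

Definition Qs_glue g a c b e1 e2 (hac : a <= c) (hcb : c <= b) :
  Qs g a c e1 -> Qs g c b e2 -> Qs g a b (e1 + e2).
Proof.
  intros [l1 [h1 [[pl1 ph1] [B1 G1]]]] [l2 [h2 [[pl2 ph2] [B2 G2]]]].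
  exists (glue c l1 l2), (glue c h1 h2).
  split; [split|split].
  - apply glue_int; auto.
  - apply glue_int; auto.
  - intros x Hx. unfold glue. destruct (Rlt_dec x c).
    + apply B1; lra.
    + apply B2; lra.
  - rewrite (glue_RInt a c b l1 l2 hac hcb pl1 pl2), (glue_RInt a c b h1 h2 hac hcb ph1 ph2).
    lra.
Defined.

Definition Qs_mono g a b e e' : e <= e' -> Qs g a b e -> Qs g a b e'.
Proof.
  intros He [l [h [[pl ph] [B G]]]]. exists l, h. split; [split|split]; auto. lra.
Defined.

Definition Qs_zero g a : Qs g a a 0.
Proof.
  exists g, g. split; [split|split].
  - apply RiemannInt_P7.
  - apply RiemannInt_P7.
  - intros; lra.
  - lra.
Defined.

Definition Qs_piece (m w : R -> R) (a b W : R) (hab : a <= b)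
  (hm : forall x y, a <= x -> x <= y -> y <= b -> m x <= m y)
  (pw : Riemann_integrable w a b)
  (hw : forall x, a <= x <= b -> 0 <= w x <= W) :
  Qs (fun x => m x * w x) a b ((m b - m a) * W * (b - a)).
Proof.
  exists (fun x => m a * w x), (fun x => m b * w x).
  split; [split|split].
  - apply Riemann_integrable_scal; exact pw.
  - apply Riemann_integrable_scal; exact pw.
  - intros x Hx. destruct (hw x Hx). split; apply Rmult_le_compat_r; auto;
      apply hm; lra.
  - pose proof (ex_RInt_Reals_1 _ _ _ pw) as ew.
    rewrite !RInt_scal_R by exact ew.
    assert (HW : RInt w a b <= W * (b - a)).
    { replace (W * (b - a)) with (RInt (fun _ => W) a b).
      2:{ rewrite RInt_const. simpl. unfold scal; simpl; unfold mult; simpl. ring. }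
      apply RInt_le; auto. apply ex_RInt_const. intros x Hx; apply hw; lra. }
    assert (Hmm : 0 <= m b - m a) by (assert (m a <= m b) by (apply hm; lra); lra).
    replace (m b * RInt w a b - m a * RInt w a b) with ((m b - m a) * RInt w a b) by ring.
    rewrite Rmult_assoc. apply Rmult_le_compat_l; auto.
Defined.

Definition Qs_steps (m w : R -> R) (a b W d : R) (hd : 0 <= d)
  (hm : forall x y, a <= x -> x <= y -> y <= b -> m x <= m y)
  (pw : Riemann_integrable w a b)
  (hw : forall x, a <= x <= b -> 0 <= w x <= W) :
  forall n : nat, a + INR n * d <= b ->
    Qs (fun x => m x * w x) a (a + INR n * d) ((m (a + INR n * d) - m a) * W * d).
Proof.
  induction n as [|n IH]; intro Hn.
  - simpl. replace (a + 0 * d) with a by ring.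
    replace ((m a - m a) * W * d) with 0 by ring. apply Qs_zero.
  - rewrite S_INR in *.
    assert (Hn' : a + INR n * d <= b) by (pose proof (pos_INR n); nra).
    assert (h0 : a <= a + INR n * d) by (pose proof (pos_INR n); nra).
    replace ((m (a + (INR n + 1) * d) - m a) * W * d) with
      ((m (a + INR n * d) - m a) * W * d +
       (m (a + (INR n + 1) * d) - m (a + INR n * d)) * W *
        ((a + (INR n + 1) * d) - (a + INR n * d))) by ring.
    apply Qs_glue with (c := a + INR n * d); [lra|lra| apply IH; exact Hn'|].
    apply Qs_piece; [lra| | |].
    + intros x y Hx Hxy Hy. apply hm; lra.
    + apply RiemannInt_P23 with a; [apply RiemannInt_P22 with b|]; auto; lra.
    + intros x Hx. apply hw. lra.
Defined.

Definition mono_int (m w : R -> R) (a b W : R) (hab : a <= b)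
  (hm : forall x y, a <= x -> x <= y -> y <= b -> m x <= m y)
  (pw : Riemann_integrable w a b)
  (hw : forall x, a <= x <= b -> 0 <= w x <= W) :
  Riemann_integrable (fun x => m x * w x) a b.
Proof.
  apply squeeze; auto. intros eta heta.
  assert (HW : 0 <= W) by (destruct (hw a); lra).
  assert (Hmm : 0 <= m b - m a) by (assert (m a <= m b) by (apply hm; lra); lra).
  set (K := (m b - m a) * W * (b - a)).
  assert (HK : 0 <= K) by (unfold K; apply Rmult_le_pos; [apply Rmult_le_pos|]; lra).
  assert (he : 0 < eta / (K + 1)) by (apply Rdiv_lt_0_compat; lra).
  destruct (constructive_indefinite_description _ (archimed_cor1 _ he)) as [N [HN1 HN2]].
  assert (HNp : 0 < INR N) by (apply lt_0_INR; exact HN2).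
  set (d := (b - a) / INR N).
  assert (hd : 0 <= d) by (unfold d; apply Rdiv_le_0_compat; lra).
  assert (HNd : a + INR N * d = b) by (unfold d; field; lra).
  pose proof (Qs_steps m w a b W d hd hm pw hw N ltac:(lra)) as Q.
  rewrite HNd in Q.
  refine (Qs_mono _ _ _ _ _ (Rlt_le _ _ _) Q).
  replace ((m b - m a) * W * d) with (K / INR N) by (unfold K, d; field; lra).
  unfold Rdiv. apply Rle_lt_trans with (K * (eta / (K + 1))).
  - apply Rmult_le_compat_l; lra.
  - replace (K * (eta / (K + 1))) with (eta - eta / (K + 1)) by (field; lra). lra.
Defined.

Lemma close_lem (D m : R -> R) (c d K : R) : c <= d -> 0 <= K ->
  (forall x y, c <= x -> x <= y -> y <= d -> m x <= m y) ->
  (forall s t, c <= s -> s <= t -> t <= d -> Rabs (D t - D s) <= (m t - m s) * K * (t - s)) ->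
  D d = D c.
Proof.
  intros hcd hK hm hD.
  assert (Hsteps : forall dd, 0 <= dd -> forall n : nat, c + INR n * dd <= d ->
     Rabs (D (c + INR n * dd) - D c) <= (m (c + INR n * dd) - m c) * K * dd).
  { intros dd hdd. induction n as [|n IH]; intro Hn.
    - simpl. replace (c + 0 * dd) with c by ring. rewrite Rminus_diag, Rabs_R0. lra.
    - rewrite S_INR in *.
      assert (Hn' : c + INR n * dd <= d) by (pose proof (pos_INR n); nra).
      assert (h0 : c <= c + INR n * dd) by (pose proof (pos_INR n); nra).
      specialize (IH Hn').
      specialize (hD (c + INR n * dd) (c + (INR n + 1) * dd) h0 ltac:(nra) Hn).
      replace ((c + (INR n + 1) * dd) - (c + INR n * dd)) with dd in hD by ring.
      eapply Rle_trans.
      { replace (D (c + (INR n + 1) * dd) - D c) with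
          ((D (c + (INR n + 1) * dd) - D (c + INR n * dd)) + (D (c + INR n * dd) - D c)) by ring.
        apply Rabs_triang. }
      lra. }
  assert (Hmm : 0 <= m d - m c) by (assert (m c <= m d) by (apply hm; lra); lra).
  set (M := (m d - m c) * K * (d - c)).
  assert (HM : 0 <= M) by (unfold M; apply Rmult_le_pos; [apply Rmult_le_pos|]; lra).
  destruct (Req_dec (D d) (D c)) as [E|NE]; auto. exfalso.
  set (e := Rabs (D d - D c)).
  assert (he : 0 < e) by (apply Rabs_pos_lt; lra).
  destruct (archimed_cor1 (e / (M + 1))) as [N [HN1 HN2]].
  { apply Rdiv_lt_0_compat; lra. }
  assert (HNp : 0 < INR N) by (apply lt_0_INR; exact HN2).
  set (dd := (d - c) / INR N).
  assert (hd : 0 <= dd) by (unfold dd; apply Rdiv_le_0_compat; lra).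
  assert (HNd : c + INR N * dd = d) by (unfold dd; field; lra).
  pose proof (Hsteps dd hd N ltac:(lra)) as H. rewrite HNd in H. fold e in H.
  replace ((m d - m c) * K * dd) with (M * / INR N) in H by (unfold M, dd; field; lra).
  assert (M * / INR N <= M * (e / (M + 1))) by (apply Rmult_le_compat_l; lra).
  replace (M * (e / (M + 1))) with (e - e / (M + 1)) in H0 by (field; lra).
  assert (0 < e / (M + 1)) by (apply Rdiv_lt_0_compat; lra).
  lra.
Qed.

Lemma interval_diff (X Y al be La K st : R) : al <= be -> 0 <= La -> La <= K * st ->
  al * La <= X <= be * La -> al * La <= Y <= be * La ->
  Rabs (X - Y) <= (be - al) * K * st.
Proof.
  intros Hab HL HLK HX HY.
  apply Rle_trans with ((be - al) * La).
  - unfold Rabs; destruct Rcase_abs; nra.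
  - rewrite Rmult_assoc. apply Rmult_le_compat_l; lra.
Qed.

Lemma chasR (g : R -> R) a b c : ex_RInt g a b -> ex_RInt g b c ->
  RInt g a b + RInt g b c = RInt g a c.
Proof. intros H1 H2. rewrite <- (RInt_Chasles g a b c H1 H2). reflexivity. Qed.

Lemma int_bounds (M w : R -> R) s t al be : s <= t ->
  ex_RInt (fun x => M x * w x) s t -> ex_RInt w s t ->
  (forall x, s < x < t -> 0 <= w x /\ al <= M x <= be) ->
  al * RInt w s t <= RInt (fun x => M x * w x) s t <= be * RInt w s t.
Proof.
  intros hst H1 H2 H. rewrite <- !RInt_scal_R by exact H2. split.
  - apply RInt_le; auto. apply ex_RInt_scal with (k := al) in H2. exact H2.
    intros x Hx. destruct (H x Hx) as [Hw [Ha Hb]]. apply Rmult_le_compat_r; auto.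
  - apply RInt_le; auto. apply ex_RInt_scal with (k := be) in H2. exact H2.
    intros x Hx. destruct (H x Hx) as [Hw [Ha Hb]]. apply Rmult_le_compat_r; auto.
Qed.

Lemma RInt_le_const (w : R -> R) s t W : s <= t -> ex_RInt w s t ->
  (forall x, s < x < t -> w x <= W) -> RInt w s t <= W * (t - s).
Proof.
  intros hst H1 H. replace (W * (t - s)) with (RInt (fun _ => W) s t).
  2:{ rewrite RInt_const. simpl. unfold scal; simpl; unfold mult; simpl. ring. }
  apply RInt_le; auto. apply ex_RInt_const.
Qed.

Lemma phi_mono x y : 0 <= x -> x <= y -> x / (1 + x) <= y / (1 + y).
Proof.
  intros. replace (x / (1 + x)) with (1 - / (1 + x)) by (field; lra).
  replace (y / (1 + y)) with (1 - / (1 + y)) by (field; lra).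
  assert (/ (1 + y) <= / (1 + x)) by (apply Rinv_le_contravar; lra). lra.
Qed.

Lemma phi_range x : 0 <= x -> 0 <= x / (1 + x) <= 1.
Proof.
  intros. replace (x / (1 + x)) with (1 - / (1 + x)) by (field; lra).
  assert (/ (1 + x) <= 1) by (rewrite <- Rinv_1; apply Rinv_le_contravar; lra).
  assert (0 < / (1 + x)) by (apply Rinv_0_lt_compat; lra). lra.
Qed.

Lemma psi_mono x y : 0 <= x -> x <= y -> 1 / (1 + y) <= 1 / (1 + x).
Proof.
  intros. unfold Rdiv. rewrite !Rmult_1_l. apply Rinv_le_contravar; lra.
Qed.

Lemma psi_range x : 0 <= x -> 0 < 1 / (1 + x) <= 1.
Proof.
  intros. unfold Rdiv. rewrite Rmult_1_l. split.
  apply Rinv_0_lt_compat; lra.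
  rewrite <- Rinv_1; apply Rinv_le_contravar; lra.
Qed.

Section Main.
Variable f : R -> R.
Variable u : R.
Hypothesis hu : 0 < u < 1 / 2.
Hypothesis fle : forall x y, 0 <= x -> x <= y -> y <= 1 -> f x <= f y.

Let c0 := u / (1 + u).
Lemma c0_pos : 0 < c0.
Proof. unfold c0. apply Rdiv_lt_0_compat; lra. Qed.
Lemma c0_lt_u : c0 < u.
Proof. unfold c0. apply Rmult_lt_reg_r with (1 + u); [lra|].
  unfold Rdiv. rewrite Rmult_assoc, Rinv_l by lra. nra. Qed.

Definition g1 := fun y => f y * / y.
Definition g2 := fun x => f (x / (1 + x)) * / (x * (1 + x)).
Definition g3 := fun x => f (1 / (1 + x)) * / (1 + x).

Lemma RI1 : Riemann_integrable g1 c0 1.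
Proof.
  pose proof c0_pos. pose proof c0_lt_u.
  apply (mono_int f (fun y => / y) c0 1 (/ c0)); [lra| | |].
  - intros x y Hx Hxy Hy. apply fle; lra.
  - apply ex_RInt_Reals_0; apply (ex_RInt_continuous (V := R_CompleteNormedModule)). intros z Hz.
    rewrite Rmin_left, Rmax_right in Hz by lra.
    apply (ex_derive_continuous (fun y => / y)). auto_derive. lra.
  - intros x Hx. split. left; apply Rinv_0_lt_compat; lra.
    apply Rinv_le_contravar; lra.
Qed.

Lemma RI2 : Riemann_integrable g2 u 1.
Proof.
  apply (mono_int (fun x => f (x / (1 + x))) (fun x => / (x * (1 + x))) u 1 (/ (u * (1 + u)))); [lra| | |].
  - intros x y Hx Hxy Hy. apply fle.
    + apply phi_range; lra.
    + apply phi_mono; lra.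
    + apply phi_range; lra.
  - apply ex_RInt_Reals_0; apply (ex_RInt_continuous (V := R_CompleteNormedModule)). intros z Hz.
    rewrite Rmin_left, Rmax_right in Hz by lra.
    apply (ex_derive_continuous (fun x => / (x * (1 + x)))). auto_derive. nra.
  - intros x Hx. split. left; apply Rinv_0_lt_compat; nra.
    apply Rinv_le_contravar; nra.
Qed.

Lemma RI3 : Riemann_integrable g3 u 1.
Proof.
  assert (H : Riemann_integrable (fun x => - f (1 / (1 + x)) * / (1 + x)) u 1).
  { apply (mono_int (fun x => - f (1 / (1 + x))) (fun x => / (1 + x)) u 1 1); [lra| | |].
    - intros x y Hx Hxy Hy. apply Ropp_le_contravar. apply fle.
      + left; apply psi_range; lra.
      + apply psi_mono; lra.
      + apply psi_range; lra.
    - apply ex_RInt_Reals_0; apply (ex_RInt_continuous (V := R_CompleteNormedModule)). intros z Hz.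
      rewrite Rmin_left, Rmax_right in Hz by lra.
      apply (ex_derive_continuous (fun x => / (1 + x))). auto_derive. lra.
    - intros x Hx. split. left; apply Rinv_0_lt_compat; lra.
      rewrite <- Rinv_1; apply Rinv_le_contravar; lra. }
  apply (Riemann_integrable_scal _ _ _ (-1)) in H.
  refine (Riemann_integrable_ext _ g3 u 1 _ H). intros x _. unfold g3. ring.
Qed.

Lemma ex1 s t : c0 <= s -> s <= t -> t <= 1 -> ex_RInt g1 s t.
Proof.
  intros. apply ex_RInt_Reals_1. apply RiemannInt_P23 with c0.
  apply RiemannInt_P22 with 1. exact RI1. lra. lra.
Qed.
Lemma ex2 s t : u <= s -> s <= t -> t <= 1 -> ex_RInt g2 s t.
Proof.
  intros. apply ex_RInt_Reals_1. apply RiemannInt_P23 with u.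
  apply RiemannInt_P22 with 1. exact RI2. lra. lra.
Qed.
Lemma ex3 s t : u <= s -> s <= t -> t <= 1 -> ex_RInt g3 s t.
Proof.
  intros. apply ex_RInt_Reals_1. apply RiemannInt_P23 with u.
  apply RiemannInt_P22 with 1. exact RI3. lra. lra.
Qed.

Lemma RInt_pt0 (g : R -> R) a : RInt g a a = 0.
Proof. rewrite RInt_point. reflexivity. Qed.

Lemma partA : RInt g2 u 1 = RInt g1 c0 (1 / 2).
Proof.
  pose proof c0_pos as Hc0. pose proof c0_lt_u as Hc0u.
  set (phi := fun x => x / (1 + x)).
  assert (Hphi : forall x, u <= x -> x <= 1 -> c0 <= phi x <= 1).
  { intros x H1 H2. unfold phi, c0. split. apply phi_mono; lra. apply phi_range; lra. }
  assert (Hphim : forall x y, u <= x -> x <= y -> phi x <= phi y).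
  { intros x y H1 H2. unfold phi. apply phi_mono; lra. }
  set (D := fun t => RInt g1 (phi u) (phi t) - RInt g2 u t).
  assert (HD : D 1 = D u).
  { apply close_lem with (m := fun x => f (phi x)) (K := / (u * (1 + u))).
    - lra.
    - left; apply Rinv_0_lt_compat; nra.
    - intros x y H1 H2 H3. destruct (Hphi x) as [? ?]; try lra. destruct (Hphi y); try lra.
      apply fle; try lra. apply Hphim; lra.
    - intros s t Hs Hst Ht.
      destruct (Hphi s) as [Hs1 Hs2]; try lra. destruct (Hphi t) as [Ht1 Ht2]; try lra.
      destruct (Hphi u) as [Hu1 Hu2]; try lra.
      pose proof (Hphim s t ltac:(lra) Hst) as Hst'.
      pose proof (Hphim u s ltac:(lra) Hs) as Hus'.
      unfold D.
      rewrite <- (chasR g1 (phi u) (phi s) (phi t)) by (apply ex1; lra).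
      rewrite <- (chasR g2 u s t) by (apply ex2; lra).
      replace (RInt g1 (phi u) (phi s) + RInt g1 (phi s) (phi t) - (RInt g2 u s + RInt g2 s t)
               - (RInt g1 (phi u) (phi s) - RInt g2 u s))
        with (RInt g1 (phi s) (phi t) - RInt g2 s t) by ring.
      assert (exw2 : ex_RInt (fun x => / (x * (1 + x))) s t).
      { apply (ex_RInt_continuous (V := R_CompleteNormedModule)). intros z Hz.
        rewrite Rmin_left, Rmax_right in Hz by lra.
        apply (ex_derive_continuous (fun x => / (x * (1 + x)))). auto_derive. nra. }
      apply interval_diff with (La := RInt (fun x => / (x * (1 + x))) s t).
      + apply fle; lra.
      + apply RInt_ge_0; auto. intros x Hx. left. apply Rinv_0_lt_compat. nra.
      + apply RInt_le_const; auto. intros x Hx. apply Rinv_le_contravar; nra.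
      + rewrite ftc2 by lra. fold (phi t) (phi s). rewrite <- ftc1 by lra.
        unfold g1. apply int_bounds; auto.
        * apply ex1; lra.
        * apply (ex_RInt_continuous (V := R_CompleteNormedModule)). intros z Hz.
          rewrite Rmin_left, Rmax_right in Hz by lra.
          apply (ex_derive_continuous (fun y => / y)). auto_derive. lra.
        * intros x Hx. split. left; apply Rinv_0_lt_compat; lra.
          split; apply fle; lra.
      + unfold g2. apply int_bounds with (M := fun x => f (phi x)) (w := fun x => / (x * (1 + x))); auto.
        * apply ex2; lra.
        * intros x Hx. split. left; apply Rinv_0_lt_compat; nra.
          destruct (Hphi x); try lra.
          split; apply fle; try lra; apply Hphim; lra. }
  unfold D in HD. rewrite !RInt_pt0 in HD.
  replace (phi 1) with (1 / 2) in HD by (unfold phi; field).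
  replace (phi u) with c0 in HD by reflexivity. lra.
Qed.

Lemma partB : RInt g3 u 1 = RInt g1 (1 / 2) (1 / (1 + u)).
Proof.
  pose proof c0_pos as Hc0. pose proof c0_lt_u as Hc0u.
  set (psi := fun x => 1 / (1 + x)).
  assert (Hpsi : forall x, u <= x -> x <= 1 -> c0 <= psi x <= 1).
  { intros x H1 H2. unfold psi. split.
    - apply Rle_trans with (1 / (1 + 1)). lra. apply psi_mono; lra.
    - apply psi_range; lra. }
  assert (Hpsim : forall x y, u <= x -> x <= y -> psi y <= psi x).
  { intros x y H1 H2. unfold psi. apply psi_mono; lra. }
  set (D := fun t => RInt g1 (psi t) (psi u) - RInt g3 u t).
  assert (HD : D 1 = D u).
  { apply close_lem with (m := fun x => - f (psi x)) (K := 1).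
    - lra.
    - lra.
    - intros x y H1 H2 H3. destruct (Hpsi x) as [? ?]; try lra. destruct (Hpsi y); try lra.
      apply Ropp_le_contravar. apply fle; try lra. apply Hpsim; lra.
    - intros s t Hs Hst Ht.
      destruct (Hpsi s) as [Hs1 Hs2]; try lra. destruct (Hpsi t) as [Ht1 Ht2]; try lra.
      destruct (Hpsi u) as [Hu1 Hu2]; try lra.
      pose proof (Hpsim s t ltac:(lra) Hst) as Hst'.
      pose proof (Hpsim u s ltac:(lra) Hs) as Hus'.
      unfold D.
      rewrite <- (chasR g1 (psi t) (psi s) (psi u)) by (apply ex1; lra).
      rewrite <- (chasR g3 u s t) by (apply ex3; lra).
      replace (RInt g1 (psi t) (psi s) + RInt g1 (psi s) (psi u) - (RInt g3 u s + RInt g3 s t)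
               - (RInt g1 (psi s) (psi u) - RInt g3 u s))
        with (RInt g1 (psi t) (psi s) - RInt g3 s t) by ring.
      assert (exw3 : ex_RInt (fun x => / (1 + x)) s t).
      { apply (ex_RInt_continuous (V := R_CompleteNormedModule)). intros z Hz.
        rewrite Rmin_left, Rmax_right in Hz by lra.
        apply (ex_derive_continuous (fun x => / (1 + x))). auto_derive. lra. }
      replace (- f (psi t) - - f (psi s)) with (f (psi s) - f (psi t)) by ring.
      apply interval_diff with (La := RInt (fun x => / (1 + x)) s t).
      + apply fle; lra.
      + apply RInt_ge_0; auto. intros x Hx. left. apply Rinv_0_lt_compat. lra.
      + apply RInt_le_const; auto. intros x Hx.
        rewrite <- Rinv_1; apply Rinv_le_contravar; lra.
      + rewrite ftc3 by lra.
        replace (ln (1 + t) - ln (1 + s)) with (ln (psi s) - ln (psi t)).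
        2:{ unfold psi, Rdiv. rewrite !Rmult_1_l, !ln_Rinv by lra. ring. }
        rewrite <- ftc1 by lra.
        unfold g1. apply int_bounds; auto.
        * apply ex1; lra.
        * apply (ex_RInt_continuous (V := R_CompleteNormedModule)). intros z Hz.
          rewrite Rmin_left, Rmax_right in Hz by lra.
          apply (ex_derive_continuous (fun y => / y)). auto_derive. lra.
        * intros x Hx. split. left; apply Rinv_0_lt_compat; lra.
          split; apply fle; lra.
      + unfold g3. apply int_bounds with (M := fun x => f (psi x)) (w := fun x => / (1 + x)); auto.
        * apply ex3; lra.
        * intros x Hx. split. left; apply Rinv_0_lt_compat; lra.
          destruct (Hpsi x); try lra.
          split; apply fle; try lra; apply Hpsim; lra. }
  unfold D in HD. rewrite !RInt_pt0 in HD.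
  replace (psi 1) with (1 / 2) in HD by (unfold psi; field).
  replace (psi u) with (1 / (1 + u)) in HD by reflexivity. lra.
Qed.

End Main.

Theorem mainTheorem4 (u : R) (f : R -> R)
  (hu : 0 < u < 1 / 2) (hL1 : L1_mu f) (hinc : strictly_increasing_01 f) :
  exists (pr1 : Riemann_integrable (mu_dens f) u 1)
         (pr2 : Riemann_integrable (mu_dens (Fhat f)) u 1),
    RiemannInt pr2 < RiemannInt pr1 /\
    RiemannInt pr1 - RiemannInt pr2 >= (f (1 / (1 + u)) - f u) * ln (1 + u).
Proof.
  assert (fle : forall x y, 0 <= x -> x <= y -> y <= 1 -> f x <= f y).
  { intros x y H1 H2 H3. destruct (Req_dec x y) as [->|Hne]; [lra|].
    left; apply hinc; lra. }
  pose proof (c0_pos u hu) as Hc0. pose proof (c0_lt_u u hu) as Hc0u.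
  set (c0 := u / (1 + u)) in *.
  assert (Hv : u < 1 / (1 + u)).
  { apply Rmult_lt_reg_r with (1 + u); [lra|].
    unfold Rdiv. rewrite Rmult_assoc, Rinv_l by lra. nra. }
  assert (Hv1 : 1 / (1 + u) <= 1) by (apply psi_range; lra).
  assert (Hh : 1 / 2 <= 1 / (1 + u)) by (apply Rle_trans with (1 / (1 + 1)); [lra|apply psi_mono; lra]).
  assert (pr1 : Riemann_integrable (mu_dens f) u 1).
  { refine (Riemann_integrable_ext (g1 f) _ u 1 _ _).
    - intros x _. reflexivity.
    - apply RiemannInt_P23 with c0. apply (RI1 f u hu fle). lra. }
  assert (pr2 : Riemann_integrable (mu_dens (Fhat f)) u 1).
  { refine (Riemann_integrable_ext (fun x => g2 f x + 1 * g3 f x) _ u 1 _ _).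
    - rewrite Rmin_left, Rmax_right by lra. intros x Hx.
      unfold mu_dens, Fhat, g2, g3. field. lra.
    - apply RiemannInt_P10. apply (RI2 f u hu fle). apply (RI3 f u hu fle). }
  exists pr1, pr2.
  rewrite <- (RInt_Reals _ _ _ pr1), <- (RInt_Reals _ _ _ pr2).
  assert (E1 : RInt (mu_dens f) u 1 = RInt (g1 f) u 1) by (apply RInt_ext; intros; reflexivity).
  assert (E2 : RInt (mu_dens (Fhat f)) u 1 = RInt (g2 f) u 1 + RInt (g3 f) u 1).
  { transitivity (RInt (fun x => g2 f x + g3 f x) u 1).
    - apply RInt_ext. rewrite Rmin_left, Rmax_right by lra. intros x Hx.
      change (mu_dens (Fhat f) x = g2 f x + g3 f x).
      unfold mu_dens, Fhat, g2, g3. field. lra.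
    - exact (RInt_plus (g2 f) (g3 f) u 1 (ex2 f u hu fle u 1 ltac:(lra) ltac:(lra) ltac:(lra))
                                         (ex3 f u hu fle u 1 ltac:(lra) ltac:(lra) ltac:(lra))). }
  rewrite E1, E2, (partA f u hu fle), (partB f u hu fle).
  fold c0.
  assert (ex : forall s t, c0 <= s -> s <= t -> t <= 1 -> ex_RInt (g1 f) s t)
    by (intros; apply (ex1 f u hu fle); auto).
  rewrite (chasR _ c0 (1/2) (1 / (1 + u))) by (apply ex; lra).
  rewrite <- (chasR _ c0 u (1 / (1 + u))) by (apply ex; lra).
  rewrite <- (chasR _ u (1 / (1 + u)) 1) by (apply ex; lra).
  assert (exw : forall s t, 0 < s -> s <= t -> ex_RInt (fun y => / y) s t).
  { intros s t Hs Hst. apply (ex_RInt_continuous (V := R_CompleteNormedModule)). intros z Hz.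
    rewrite Rmin_left, Rmax_right in Hz by lra.
    apply (ex_derive_continuous (fun y => / y)). auto_derive. lra. }
  assert (B1 : f (1 / (1 + u)) * ln (1 + u) <= RInt (g1 f) (1 / (1 + u)) 1).
  { replace (ln (1 + u)) with (RInt (fun y => / y) (1 / (1 + u)) 1).
    2:{ rewrite ftc1 by lra. rewrite ln_1. idtac. unfold Rdiv. rewrite Rmult_1_l. rewrite ln_Rinv by lra. change (@eq R (0 - - ln (1 + u)) (ln (1 + u))). ring. }
    unfold g1. apply int_bounds with (be := f 1); auto.
    - apply ex; lra.
    - apply exw; lra.
    - intros x Hx. split. left; apply Rinv_0_lt_compat; lra. split; apply fle; lra. }
  assert (B2 : RInt (g1 f) c0 u <= f u * ln (1 + u)).
  { replace (ln (1 + u)) with (RInt (fun y => / y) c0 u).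
    2:{ rewrite ftc1 by lra. unfold c0. rewrite ln_div by lra. change (@eq R (ln u - (ln u - ln (1 + u))) (ln (1 + u))). ring. }
    unfold g1. apply int_bounds with (al := f c0); auto.
    - lra.
    - apply ex; lra.
    - apply exw; lra.
    - intros x Hx. split. left; apply Rinv_0_lt_compat; lra. split; apply fle; lra. }
  assert (Hf : f u < f (1 / (1 + u))) by (apply hinc; lra).
  assert (Hl : 0 < ln (1 + u)) by (rewrite <- ln_1; apply ln_increasing; lra).
  assert (0 < (f (1 / (1 + u)) - f u) * ln (1 + u)) by (apply Rmult_lt_0_compat; lra).
  split; lra.
Qed.
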